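(* Let $\alpha<0$ and $U(x)=-x^\alpha$ on $(0,\infty)$. Let $\pi_t$ be a trading strategy such that $|\mathbb{E}U(V_t^\pi)|\le Ke^{-ct}$ for all sufficiently large $t$, for some constants $c,K>0$. Then $\pi_t$ generates an asymptotic exponential arbitrage with geometrically decaying probability of failure, i.e. there are $b>0$, $c'>0$ with $\mathbb{P}(V_t^\pi\ge e^{bt})\ge1-e^{-c't}$ for all sufficiently large $t$.
   Context: Setting: $X_t$ is a real-valued process on a filtered probability space with filtration $\mathcal{F}_t=\sigma(X_s,s\le t)$, $S_t=e^{X_t}$. A trading strategy is a predictable $[0,1]$-valued process $(\pi_t)_{t\ge1}$; its wealth is $V_0^\pi=V_0>0$, $V_t^\pi=V_{t-1}^\pi((1-\pi_t)+\pi_tS_t/S_{t-1})$ (so $V_t^\pi>0$). *)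

(* Defs.v *)
From HB Require Import structures.
From mathcomp Require Import all_boot all_order all_algebra.
From mathcomp Require Import all_classical all_reals all_analysis.
Set Implicit Arguments. Unset Strict Implicit. Unset Printing Implicit Defensive.
Import Order.TTheory GRing.Theory Num.Theory.
Local Open Scope classical_set_scope.
Local Open Scope ring_scope.

Definition natural_filtration {d : measure_display} {Omega : measurableType d}
  {R : realType} (X : nat -> Omega -> R) (t : nat) : set (set Omega) :=
  <<s \bigcup_(s in [set s : nat | (s <= t)%N])
        [set X s @^-1` B | B in [set B : set R | measurable B]] >>.

Definition trading_strategy {d : measure_display} {Omega : measurableType d}
  {R : realType} (X : nat -> Omega -> R) (pi : nat -> Omega -> R) : Prop :=
  (forall t : nat, (0 < t)%N -> forall B : set R, measurable B ->
      natural_filtration X t.-1 (pi t @^-1` B)) /\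
  (forall t : nat, (0 < t)%N -> forall w : Omega, 0 <= pi t w <= 1).

(* Wealth: V_0 = V0, V_t = V_{t-1} ((1 - pi_t) + pi_t S_t / S_{t-1}), S_t = e^{X_t}. *)
Fixpoint wealth {Omega : Type} {R : realType} (X pi : nat -> Omega -> R)
  (V0 : R) (t : nat) (w : Omega) : R :=
  match t with
  | O => V0
  | t'.+1 => wealth X pi V0 t' w *
      ((1 - pi t'.+1 w) + pi t'.+1 w * (expR (X t'.+1 w) / expR (X t' w)))
  end.

Definition power_utility {R : realType} (alpha : R) (x : R) : R := - (x `^ alpha).

(* Main.v *)
Require Import Defs.
From HB Require Import structures.
From mathcomp Require Import all_boot all_order all_algebra.
From mathcomp Require Import all_classical all_reals all_analysis.
From mathcomp Require Import ring lra.
Import Order.TTheory GRing.Theory Num.Theory.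
Local Open Scope classical_set_scope.
Local Open Scope ring_scope.

Lemma nat_filt_sub {d : measure_display} {Omega : measurableType d}
  {R : realType} (X : nat -> Omega -> R) (hX : forall t, measurable_fun setT (X t)) t :
  natural_filtration X t `<=` measurable.
Proof.
apply: smallest_sub; first exact: sigma_algebra_measurable.
move=> A [s _ [B mB <-]].
have := hX s measurableT B mB. by rewrite setTI.
Qed.

Lemma meas_pi {d : measure_display} {Omega : measurableType d}
  {R : realType} (X : nat -> Omega -> R) (hX : forall t, measurable_fun setT (X t))
  pi (hpi : trading_strategy X pi) t : (0 < t)%N -> measurable_fun setT (pi t).
Proof.
move=> t0 _ B mB; rewrite setTI; apply: (@nat_filt_sub _ _ _ X hX t.-1).
exact: hpi.1.
Qed.

Lemma meas_wealth {d : measure_display} {Omega : measurableType d}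
  {R : realType} (X : nat -> Omega -> R) (hX : forall t, measurable_fun setT (X t))
  pi (hpi : trading_strategy X pi) V0 t : measurable_fun setT (wealth X pi V0 t).
Proof.
elim: t => [|t IH] /=; first exact: measurable_cst.
have mp := meas_pi X hX pi hpi t.+1 (ltn0Sn t).
have -> : (fun w => wealth X pi V0 t w * (1 - pi t.+1 w + pi t.+1 w * (expR (X t.+1 w) / expR (X t w)))) =
  (wealth X pi V0 t) \* ((cst 1 \- pi t.+1) \+ (pi t.+1 \* (expR \o (X t.+1 \- X t)))).
  by apply/funext => w /=; rewrite expRB.
apply: measurable_realfun.measurable_funM => //; apply: measurable_realfun.measurable_funD.
  by apply: measurable_realfun.measurable_funB => //; exact: measurable_cst.
apply: measurable_realfun.measurable_funM => //.
apply: measurableT_comp; first exact: measurable_realfun.measurable_expR.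
exact: measurable_realfun.measurable_funB.
Qed.

Lemma wealth_gt0 {Omega : Type} {R : realType} (X pi : nat -> Omega -> R) V0
  (hpi : forall t : nat, (0 < t)%N -> forall w : Omega, 0 <= pi t w <= 1) :
  0 < V0 -> forall t w, 0 < wealth X pi V0 t w.
Proof.
move=> hV t w; elim: t => [|t IH] //=.
apply: mulr_gt0 => //.
have /andP[p0 p1] := hpi t.+1 (ltn0Sn t) w.
have r0 : 0 < expR (X t.+1 w) / expR (X t w) by apply: divr_gt0; exact: expR_gt0.
move: (pi t.+1 w) p0 p1 r0 => p p0 p1; move: (_ / _) => r r0.
have [->|pl1] := eqVneq p 1; first by lra.
have : p < 1 by rewrite lt_neqAle pl1 p1.
move=> pl; nra.
Qed.

Theorem theoremt3p5 (R : realType) (d : measure_display) (Omega : measurableType d)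
  (P : probability Omega R) (X : nat -> Omega -> R)
  (hX : forall t : nat, measurable_fun setT (X t))
  (pi : nat -> Omega -> R) (hpi : trading_strategy X pi)
  (V0 : R) (hV0 : 0 < V0) (alpha : R) (halpha : alpha < 0)
  (c K : R) (hc : 0 < c) (hK : 0 < K)
  (hU : exists T : nat, forall t : nat, (T <= t)%N ->
     (`| \int[P]_(w in setT) (power_utility alpha (wealth X pi V0 t w))%:E |
        <= (K * expR (- (c * t%:R)))%:E)%E) :
  exists b c' : R, 0 < b /\ 0 < c' /\
    exists T : nat, forall t : nat, (T <= t)%N ->
      ((1 - expR (- (c' * t%:R)))%:E
         <= P [set w | (expR (b * t%:R) <= wealth X pi V0 t w)%R])%E.
Proof.
have Wpos := wealth_gt0 X pi V0 hpi.2 hV0.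
have mW := meas_wealth X hX pi hpi V0.
case: hU => T0 hT0.
have hb : 0 < c / (- (2 * alpha)).
  by apply: divr_gt0; lra.
exists (c / (- (2 * alpha))), (c / 4).
split => //; split; first by apply: divr_gt0; lra.
exists (maxn T0 (Num.trunc (4 * K / c)).+1) => t.
rewrite geq_max => /andP[tT0 tT1].
have H := hT0 t tT0.
set b := c / (- (2 * alpha)) in hb *.
set W := wealth X pi V0 t in H *.
set e := expR (b * t%:R).
set A := [set w | W w < e].
have mA : measurable A.
  have := mW t measurableT `]-oo, e[%classic (measurable_itv _). rewrite setTI.
  congr measurable; apply/seteqP; split => w /=; by rewrite in_itv.
have AC : [set w | e <= W w] = ~` A.
  apply/seteqP; split => w /=.
    by move=> h1 h2; move: h1; rewrite leNgt h2.
  by move/negP; rewrite -leNgt.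
rewrite AC probability_setC //.
have finA : P A \is a fin_num by apply: fin_num_measure.
rewrite -(fineK finA) -EFinB lee_fin.
set p := fine (P A).
have p0 : 0 <= p by rewrite /p fine_ge0 // measure_ge0.
set k := expR (alpha * (b * t%:R)).
have mWa : measurable_fun setT (fun w => W w `^ alpha).
  exact: measurableT_comp (measurable_realfun.measurable_powR _) (mW t).
have Ieq : (\int[P]_w (power_utility alpha (W w))%:E = - \int[P]_w (W w `^ alpha)%:E)%E.
  rewrite -integral_ge0N; last by move=> w _; rewrite lee_fin powR_ge0.
  by apply: eq_integral => w _; rewrite /power_utility EFinN.
rewrite Ieq abseN gee0_abs in H; last first.
  by apply: integral_ge0 => w _; rewrite lee_fin powR_ge0.
have Hlow : (\int[P]_w (k%:E * (\1_A w)%:E) <= \int[P]_w (W w `^ alpha)%:E)%E.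
  apply: ge0_le_integral => //.
  - by move=> w _; rewrite -EFinM lee_fin mulr_ge0 // ?expR_ge0.
  - apply/measurable_realfun.measurable_EFinP; apply: measurable_realfun.measurable_funM.
      exact: measurable_cst.
    exact: measurable_realfun.measurable_indic.
  - exact/measurable_realfun.measurable_EFinP.
  move=> w _; rewrite -EFinM lee_fin indicE.
  have [wA|wA] := boolP (w \in A); last by rewrite mulr0 powR_ge0.
  rewrite mulr1 /powR gt_eqF ?Wpos // /k ler_expR.
  rewrite inE /A /= in wA.
  have : ln (W w) <= b * t%:R.
    rewrite -[X in _ <= X]expRK ler_ln ?posrE ?expR_gt0 ?Wpos //; exact: ltW.
  move=> hl; rewrite mulrC; nra.
rewrite ge0_integralZl // in Hlow; last first.
  - by rewrite lee_fin expR_ge0.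
  - apply/measurable_realfun.measurable_EFinP; exact: measurable_realfun.measurable_indic.
rewrite integral_indic // setIT in Hlow.
have kp : k * p <= K * expR (- (c * t%:R)).
  rewrite -lee_fin EFinM /p fineK //; exact: le_trans Hlow H.
set E2 := expR (- (c / 4 * t%:R)).
have E2pos : 0 < E2 by apply: expR_gt0.
have hk : k = E2 ^+ 2.
  rewrite /k /E2 -expRM_natl; congr expR; rewrite /b; field.
  by apply/eqP => h; move: halpha; rewrite h ltxx.
have hE4 : expR (- (c * t%:R)) = E2 ^+ 4.
  rewrite /E2 -expRM_natl; congr expR; by field.
have ht : 4 * K / c < t%:R.
  apply: lt_le_trans (truncnS_gt _) _; rewrite ler_nat; exact: tT1.
have hKt : 4 * K < t%:R * c by rewrite -ltr_pdivrMr.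
have hKE : K * E2 <= 1.
  have : 1 + c / 4 * t%:R <= expR (c / 4 * t%:R) by apply: expR_ge1Dx.
  have e12 : expR (c / 4 * t%:R) * E2 = 1 by rewrite /E2 -expRD subrr expR0.
  move=> h1.
  have hK1 : K <= expR (c / 4 * t%:R) by lra.
  by rewrite -e12 ler_wpM2r // ltW.
rewrite hk hE4 in kp.
have hp : p <= K * E2 ^+ 2.
  have h2 : 0 < E2 ^+ 2 by apply: exprn_gt0.
  rewrite -(ler_pM2l h2); apply: le_trans kp _.
  by rewrite le_eqVlt; apply/orP; left; apply/eqP; ring.
have : K * E2 ^+ 2 <= E2.
  rewrite expr2 mulrA -[X in _ <= X]mul1r ler_wpM2r //; exact: ltW.
move=> h3; lra.
Qed.
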